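(* Let $\mathbf{E},\mathbf{F}$ be finite-dimensional Euclidean spaces, $\mathcal{K}\subset\mathbf{E}$ a proper cone, $\mathcal{A}:\mathbf{E}\to\mathbf{F}$ linear, $b\in\mathbf{F}$, $c\in\mathbf{E}$, and consider the conic program $\min\{\langle c,x\rangle : \mathcal{A}x=b,\ x\in\mathcal{K}\}$ with solution set $\mathcal{X}_\star$ and its dual $\max\{\langle b,y\rangle : c-\mathcal{A}^*y\in\mathcal{K}^*\}$ with solution set $\mathcal{Y}_\star$. Suppose strong duality holds, and suppose dual strict complementarity holds for a primal–dual solution pair $(x_\star,y_\star)\in\mathcal{X}_\star\times\mathcal{Y}_\star$ with slack $s_\star=c-\mathcal{A}^*y_\star$, i.e. $x_\star\in\mathrm{relint}(\mathcal{F}_{s_\star})$. Then there are constants $\gamma,\gamma'\ge 0$ such that for every $x\in\mathcal{V}_{s_\star}$, $$\mathrm{dist}(x,\mathcal{X}_\star)\le \gamma\|\mathcal{A}(x)-b\|_2+\gamma'\,\mathrm{dist}(x,\mathcal{F}_{s_\star}).$$ Moreover, if $\mathcal{X}_\star$ is a singleton, then one may take $\gamma'=0$ and $\gamma=1/\sigma_{\min}(\mathcal{A}_{\mathcal{V}_{s_\star}})$, where $\mathcal{A}_{\mathcal{V}_{s_\star}}$ is the restriction of $\mathcal{A}$ to $\mathcal{V}_{s_\star}$ and $\sigma_{\min}(\mathcal{A}_{\mathcal{V}_{s_\star}})=\min_{x\in\mathcal{V}_{s_\star},\|x\|_2=1}\|\mathcal{A}x\|_2$.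
   Context: $\mathcal{K}^*=\{s\in\mathbf{E}:\langle s,x\rangle\ge0\ \forall x\in\mathcal{K}\}$ is the dual cone. Strong duality means: $\mathcal{X}_\star$ and $\mathcal{Y}_\star$ are nonempty, $\mathcal{X}_\star$ is compact, and there is a pair $(x_\star,y_\star)\in\mathcal{X}_\star\times\mathcal{Y}_\star$ with $\langle c,x_\star\rangle=\langle b,y_\star\rangle$, equivalently $\langle s_\star,x_\star\rangle=0$ where $s_\star=c-\mathcal{A}^*y_\star$. For a dual solution $y_\star$ with $s_\star=c-\mathcal{A}^*y_\star$, the complementary face is $\mathcal{F}_{s_\star}=\{x\in\mathcal{K}:\langle x,s_\star\rangle=0\}$ and the complementary space is $\mathcal{V}_{s_\star}=\mathrm{aff}(\mathcal{F}_{s_\star})$ (a linear subspace). $\mathrm{dist}(x,C)=\inf_{z\in C}\|x-z\|_2$; $\mathrm{relint}$ denotes relative interior. *)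

(* Defs.v *)
(* E = 'cV[R]_n, F = 'cV[R]_m (Euclidean spaces with the standard inner product),
   the linear map A : E -> F is represented by a matrix A : 'M[R]_(m, n),
   x |-> A *m x, whose adjoint is the transpose A^T. *)
From mathcomp Require Import all_boot all_order all_algebra.
From mathcomp Require Import all_classical all_reals all_analysis.
Import numFieldNormedType.Exports.
Import Order.TTheory GRing.Theory Num.Theory.
Set Implicit Arguments. Unset Strict Implicit. Unset Printing Implicit Defensive.
Local Open Scope classical_set_scope.
Local Open Scope ring_scope.

Section Defs.
Variable R : realType.

Definition dotv (n : nat) (u v : 'cV[R]_n) : R := \sum_(i < n) u i 0 * v i 0.

Definition enorm (n : nat) (u : 'cV[R]_n) : R := Num.sqrt (dotv u u).

Definition dist (n : nat) (x : 'cV[R]_n) (C : set 'cV[R]_n) : R :=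
  inf [set enorm (x - z) | z in C].

Definition is_cone (n : nat) (K : set 'cV[R]_n) : Prop :=
  K 0 /\ forall x t, K x -> 0 <= t -> K (t *: x).
Definition is_convex (n : nat) (K : set 'cV[R]_n) : Prop :=
  forall x y t, K x -> K y -> 0 <= t <= 1 -> K (t *: x + (1 - t) *: y).
Definition is_pointed (n : nat) (K : set 'cV[R]_n) : Prop :=
  forall x, K x -> K (- x) -> x = 0.
Definition proper_cone (n : nat) (K : set 'cV[R]_n) : Prop :=
  [/\ is_cone K, is_convex K, closed K, is_pointed K & interior K !=set0].

Definition dual_cone (n : nat) (K : set 'cV[R]_n) : set 'cV[R]_n :=
  [set s | forall x, K x -> 0 <= dotv s x].

Definition primal_feasible (m n : nat) (A : 'M[R]_(m, n)) (b : 'cV[R]_m)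
  (K : set 'cV[R]_n) : set 'cV[R]_n := [set x | A *m x = b /\ K x].
Definition primal_sol (m n : nat) (A : 'M[R]_(m, n)) (b : 'cV[R]_m)
  (c : 'cV[R]_n) (K : set 'cV[R]_n) : set 'cV[R]_n :=
  [set x | primal_feasible A b K x /\
           forall x', primal_feasible A b K x' -> dotv c x <= dotv c x'].

Definition dual_feasible (m n : nat) (A : 'M[R]_(m, n)) (c : 'cV[R]_n)
  (K : set 'cV[R]_n) : set 'cV[R]_m := [set y | dual_cone K (c - A^T *m y)].
Definition dual_sol (m n : nat) (A : 'M[R]_(m, n)) (b : 'cV[R]_m)
  (c : 'cV[R]_n) (K : set 'cV[R]_n) : set 'cV[R]_m :=
  [set y | dual_feasible A c K y /\
           forall y', dual_feasible A c K y' -> dotv b y' <= dotv b y].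

Definition strong_duality (m n : nat) (A : 'M[R]_(m, n)) (b : 'cV[R]_m)
  (c : 'cV[R]_n) (K : set 'cV[R]_n) : Prop :=
  [/\ primal_sol A b c K !=set0, dual_sol A b c K !=set0,
      compact (primal_sol A b c K) &
      exists x y, primal_sol A b c K x /\ dual_sol A b c K y /\
                  dotv c x = dotv b y].

Definition comp_face (n : nat) (K : set 'cV[R]_n) (s : 'cV[R]_n) : set 'cV[R]_n :=
  [set x | K x /\ dotv x s = 0].

Definition aff (n : nat) (C : set 'cV[R]_n) : set 'cV[R]_n :=
  [set x | exists (k : nat) (l : 'I_k -> R) (p : 'I_k -> 'cV[R]_n),
     (forall i, C (p i)) /\ \sum_(i < k) l i = 1 /\ x = \sum_(i < k) l i *: p i].

Definition relint (n : nat) (C : set 'cV[R]_n) : set 'cV[R]_n :=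
  [set x | C x /\ exists r : R, 0 < r /\
     forall z, aff C z -> enorm (z - x) < r -> C z].

Definition sigma_min (m n : nat) (A : 'M[R]_(m, n)) (V : set 'cV[R]_n) : R :=
  inf [set enorm (A *m x) | x in [set x | V x /\ enorm x = 1]].

End Defs.

(* Main.v *)
Require Import Defs.
From mathcomp Require Import all_boot all_order all_algebra.
From mathcomp Require Import all_classical all_reals all_analysis.
From mathcomp Require Import ring lra.
Import numFieldNormedType.Exports.
Import Order.TTheory GRing.Theory Num.Theory.
Set Implicit Arguments. Unset Strict Implicit. Unset Printing Implicit Defensive.
Local Open Scope classical_set_scope.
Local Open Scope ring_scope.




Section H1.
Variable R : realType.
Implicit Types n m : nat.

Lemma dotvC n (u v : 'cV[R]_n) : dotv u v = dotv v u.
Proof. by rewrite /dotv; apply: eq_bigr => i _; rewrite mulrC. Qed.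

Lemma dotvDl n (u v w : 'cV[R]_n) : dotv (u + v) w = dotv u w + dotv v w.
Proof. by rewrite /dotv -big_split; apply: eq_bigr => i _; rewrite !mxE mulrDl. Qed.

Lemma dotvZl n a (u w : 'cV[R]_n) : dotv (a *: u) w = a * dotv u w.
Proof. by rewrite /dotv mulr_sumr; apply: eq_bigr => i _; rewrite !mxE mulrA. Qed.

Lemma dotvNl n (u w : 'cV[R]_n) : dotv (- u) w = - dotv u w.
Proof. by rewrite -scaleN1r dotvZl mulN1r. Qed.

Lemma dotvBl n (u v w : 'cV[R]_n) : dotv (u - v) w = dotv u w - dotv v w.
Proof. by rewrite dotvDl dotvNl. Qed.

Lemma dotvDr n (u v w : 'cV[R]_n) : dotv w (u + v) = dotv w u + dotv w v.
Proof. by rewrite dotvC dotvDl !(dotvC w). Qed.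

Lemma dotvZr n a (u w : 'cV[R]_n) : dotv w (a *: u) = a * dotv w u.
Proof. by rewrite dotvC dotvZl dotvC. Qed.

Lemma dotvBr n (u v w : 'cV[R]_n) : dotv w (u - v) = dotv w u - dotv w v.
Proof. by rewrite dotvC dotvBl !(dotvC w). Qed.

Lemma dotv0l n (w : 'cV[R]_n) : dotv 0 w = 0.
Proof. by rewrite /dotv big1 // => i _; rewrite mxE mul0r. Qed.

Lemma dotv0r n (w : 'cV[R]_n) : dotv w 0 = 0.
Proof. by rewrite dotvC dotv0l. Qed.

Lemma dotvE n (u v : 'cV[R]_n) : dotv u v = (u^T *m v) 0 0.
Proof. by rewrite /dotv mxE; apply: eq_bigr => i _; rewrite mxE. Qed.

Lemma dotv_mul m n (M : 'M[R]_(m, n)) (u : 'cV[R]_m) (v : 'cV[R]_n) :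
  dotv u (M *m v) = dotv (M^T *m u) v.
Proof. by rewrite !dotvE trmx_mul trmxK mulmxA. Qed.

Lemma dotv_ge0 n (u : 'cV[R]_n) : 0 <= dotv u u.
Proof. by apply: sumr_ge0 => i _; rewrite -expr2 sqr_ge0. Qed.

Lemma dotv_eq0 n (u : 'cV[R]_n) : dotv u u = 0 -> u = 0.
Proof.
move=> /eqP; rewrite psumr_eq0; last by move=> i _; rewrite -expr2 sqr_ge0.
move/allP => H; apply/matrixP => i j; rewrite (ord1 j) mxE.
by have /(_ (mem_index_enum i)) := H i; rewrite mulf_eq0 orbb => /eqP.
Qed.

Lemma enorm_ge0 n (u : 'cV[R]_n) : 0 <= enorm u.
Proof. exact: sqrtr_ge0. Qed.

Lemma enorm_sq n (u : 'cV[R]_n) : enorm u ^+ 2 = dotv u u.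
Proof. by rewrite /enorm sqr_sqrtr // dotv_ge0. Qed.

Lemma enorm_eq0 n (u : 'cV[R]_n) : enorm u = 0 -> u = 0.
Proof. by move=> H; apply: dotv_eq0; rewrite -enorm_sq H expr0n. Qed.

Lemma enorm0 n : enorm (0 : 'cV[R]_n) = 0.
Proof. by rewrite /enorm dotv0l sqrtr0. Qed.

Lemma enormZ n a (u : 'cV[R]_n) : enorm (a *: u) = `|a| * enorm u.
Proof.
rewrite /enorm dotvZl dotvZr mulrA -expr2 sqrtrM ?sqr_ge0 // sqrtr_sqr //.
Qed.

Lemma enormN n (u : 'cV[R]_n) : enorm (- u) = enorm u.
Proof. by rewrite -scaleN1r enormZ normrN normr1 mul1r. Qed.

Lemma enormB n (u v : 'cV[R]_n) : enorm (u - v) = enorm (v - u).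
Proof. by rewrite -enormN opprB. Qed.

Lemma CS n (u v : 'cV[R]_n) : `|dotv u v| <= enorm u * enorm v.
Proof.
set a := dotv u u; set b := dotv u v; set c := dotv v v.
have ha : 0 <= a := dotv_ge0 u. have hc : 0 <= c := dotv_ge0 v.
have key : b ^+ 2 <= a * c.
  have [c0|cpos] := eqVneq c 0.
    have v0 : v = 0 by apply: dotv_eq0.
    by rewrite /b v0 dotv0r expr0n /= mulr_ge0.
  have cp : 0 < c by rewrite lt_neqAle eq_sym cpos hc.
  have H := dotv_ge0 (c *: u - b *: v).
  rewrite dotvBl !dotvBr !dotvZl !dotvZr -/a -/c (dotvC v u) -/b in H.
  have : 0 <= c * (a * c - b ^+ 2) by rewrite expr2; nra.
  by rewrite pmulr_rge0 // subr_ge0.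
rewrite /enorm -sqrtrM // -(sqrtr_sqr b) ler_sqrt //; exact: mulr_ge0.
Qed.

Lemma enormD n (u v : 'cV[R]_n) : enorm (u + v) <= enorm u + enorm v.
Proof.
rewrite -(ler_pXn2r (_ : 0 < 2)%N) ?nnegrE ?addr_ge0 ?enorm_ge0 //.
rewrite enorm_sq dotvDl !dotvDr (dotvC v u) sqrrD !enorm_sq.
have := CS u v; rewrite ler_norml => /andP [_ h].
lra.
Qed.

Lemma enormDB n (u v w : 'cV[R]_n) : enorm (u - w) <= enorm (u - v) + enorm (v - w).
Proof. by have := enormD (u - v) (v - w); rewrite addrA subrK. Qed.

Lemma entry_le n (u : 'cV[R]_n) i : `|u i 0| <= enorm u.
Proof.
rewrite -(sqrtr_sqr (u i 0)) ler_sqrt ?dotv_ge0 // /dotv (bigD1 i) //= expr2 lerDl.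
by apply: sumr_ge0 => j _; rewrite -expr2 sqr_ge0.
Qed.

Lemma sum_sq_le k (f : 'I_k -> R) :
  \sum_(i < k) f i ^+ 2 <= (\sum_(i < k) `|f i|) ^+ 2.
Proof.
pose K (x y : R) := 0 <= y /\ x <= y ^+ 2.
suff : K (\sum_(i < k) f i ^+ 2) (\sum_(i < k) `|f i|) by case.
apply: big_rec2; first by split; rewrite ?expr0n.
move=> i y1 y2 _ [h1 h2]; split; first by rewrite addr_ge0.
rewrite sqrrD -(real_normK (num_real (f i))).
have := normr_ge0 (f i); nra.
Qed.

Lemma enorm_le_sum n (u : 'cV[R]_n) : enorm u <= \sum_i `|u i 0|.
Proof.
rewrite -(ger0_norm (sumr_ge0 _ (fun i _ => normr_ge0 (u i 0)))).
rewrite -sqrtr_sqr ler_sqrt ?sqr_ge0 // /dotv.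
by rewrite (eq_bigr (fun i => u i 0 ^+ 2)) ?sum_sq_le // => i _; rewrite expr2.
Qed.

Definition mnorm1 m n (M : 'M[R]_(m, n)) := \sum_i \sum_j `|M i j|.

Lemma mnorm1_ge0 m n (M : 'M[R]_(m, n)) : 0 <= mnorm1 M.
Proof. by apply: sumr_ge0 => i _; apply: sumr_ge0. Qed.

Lemma enorm_mul m n (M : 'M[R]_(m, n)) (u : 'cV[R]_n) :
  enorm (M *m u) <= mnorm1 M * enorm u.
Proof.
apply: (le_trans (enorm_le_sum _)); rewrite /mnorm1 mulr_suml.
apply: ler_sum => i _; rewrite mxE mulr_suml.
apply: (le_trans (ler_norm_sum _ _ _)); apply: ler_sum => j _.
by rewrite normrM ler_wpM2l // entry_le.
Qed.

End H1.



Section H2.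
Variable R : realType.
Variable n : nat.
Implicit Types (C : set 'cV[R]_n) (x y z : 'cV[R]_n).

Lemma dist_lbound x C : has_lbound [set enorm (x - z) | z in C].
Proof. by exists 0 => _ [z _ <-]; apply: enorm_ge0. Qed.

Lemma dist_ge0 x C : 0 <= dist x C.
Proof.
have [[z Cz]|C0] := pselect (C !=set0).
  apply: lb_le_inf; first by exists (enorm (x - z)), z.
  by move=> _ [w _ <-]; apply: enorm_ge0.
rewrite /dist; have -> : [set enorm (x - z) | z in C] = set0.
  by apply/seteqP; split => // t [w Cw _]; apply: C0; exists w.
by rewrite inf0.
Qed.

Lemma dist_le x C z : C z -> dist x C <= enorm (x - z).
Proof. by move=> Cz; apply: (ge_inf (dist_lbound x C)); exists z. Qed.

Lemma dist_glb x C a : C !=set0 -> (forall z, C z -> a <= enorm (x - z)) ->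
  a <= dist x C.
Proof.
move=> [z Cz] H; apply: lb_le_inf; first by exists (enorm (x - z)), z.
by move=> _ [w Cw <-]; apply: H.
Qed.

Lemma dist_lip x y C : C !=set0 -> dist x C <= enorm (x - y) + dist y C.
Proof.
move=> C0; rewrite addrC -lerBlDr; apply: dist_glb => // z Cz.
rewrite lerBlDr addrC; apply: le_trans (enormDB x y z).
exact: dist_le.
Qed.

Lemma dist_approx x C e : C !=set0 -> 0 < e ->
  exists z, C z /\ enorm (x - z) < dist x C + e.
Proof.
move=> [w Cw] e0.
have [_ [z Cz <-] h] := inf_adherent e0 (conj (ex_intro _ (enorm (x - w)) (ex_intro2 _ _ w Cw erefl)) (dist_lbound x C)).
by exists z.
Qed.

Lemma dist_mem x C : C x -> dist x C = 0.
Proof.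
move=> Cx; apply/le_anti; rewrite dist_ge0 andbT.
by apply: le_trans (dist_le x Cx) _; rewrite subrr enorm0.
Qed.

End H2.

Section H3.
Variable R : realType.
Variable n : nat.
Variable K : set 'cV[R]_n.
Hypothesis PK : proper_cone K.
Variable s : 'cV[R]_n.
Local Notation F := (comp_face K s).

Lemma K0 : K 0. Proof. by case: PK => [[]]. Qed.
Lemma Kscale z t : K z -> 0 <= t -> K (t *: z). Proof. by case: PK => [[_ H]] *; apply: H. Qed.
Lemma Kconv z w t : K z -> K w -> 0 <= t <= 1 -> K (t *: z + (1 - t) *: w).
Proof. by case: PK => _ H *; apply: H. Qed.
Lemma Kadd z w : K z -> K w -> K (z + w).
Proof.
move=> Kz Kw.
have t01 : 0 <= (2^-1 : R) <= 1.
  apply/andP; split; first by rewrite invr_ge0 ler0n.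
  by rewrite invf_le1 ?ler1n ?ltr0n.
have := Kconv Kz Kw t01.
have h : (1 - 2^-1 : R) = 2^-1 by field.
rewrite h -scalerDr => /Kscale /(_ (_ : (0 : R) <= 2)) H.
by have := H (ler0n _ 2); rewrite scalerA mulfV // scale1r.
Qed.

Lemma F0 : F 0. Proof. by split; [apply: K0 | rewrite dotv0l]. Qed.
Lemma Fscale z t : F z -> 0 <= t -> F (t *: z).
Proof. by move=> [Kz dz] t0; split; [apply: Kscale | rewrite dotvZl dz mulr0]. Qed.
Lemma Fconv z w t : F z -> F w -> 0 <= t <= 1 -> F (t *: z + (1 - t) *: w).
Proof.
move=> [Kz dz] [Kw dw] t01; split; first exact: Kconv.
by rewrite dotvDl !dotvZl dz dw !mulr0 addr0.
Qed.
Lemma Fadd z w : F z -> F w -> F (z + w).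
Proof.
by move=> [Kz dz] [Kw dw]; split; [apply: Kadd | rewrite dotvDl dz dw addr0].
Qed.
Lemma Fne : F !=set0. Proof. by exists 0; apply: F0. Qed.

End H3.



Section H4.
Variable R : realType.
Variable n : nat.
Variable C : set 'cV[R]_n.
Hypothesis C0 : C 0.

Let P k := exists r (W : 'M[R]_(r, n)), (forall i, C (row i W)^T) /\ \rank W = k.

Lemma aff_sub r (W : 'M[R]_(r, n)) : (forall f, C f -> (f^T <= W)%MS) ->
  forall x, aff C x -> (x^T <= W)%MS.
Proof.
move=> H x [k [l [p [Cp [_ ->]]]]].
rewrite raddf_sum /=; apply: summx_sub => i _.
by rewrite linearZ /=; apply: scalemx_sub; apply: H.
Qed.

Lemma sub_aff r (W : 'M[R]_(r, n)) : (forall i, C (row i W)^T) ->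
  forall x, (x^T <= W)%MS -> aff C x.
Proof.
move=> HW x xW.
set u := x^T *m pinvmx W.
set c := 1 - \sum_(i < r) u 0 i.
set M := col_mx W (0 : 'M[R]_(1, n)).
set v := row_mx u (const_mx c : 'rV[R]_1).
exists (r + 1)%N, (fun i => v 0 i), (fun i => (row i M)^T).
split; [|split].
- move=> i; case: (split_ordP i) => j ->.
    by rewrite /M rowKu.
  by rewrite /M rowKd row0 trmx0.
- rewrite big_split_ord /= big_ord1.
  under eq_bigr do rewrite /v row_mxEl.
  by rewrite /v row_mxEr mxE /c addrC subrK.
- have : x^T = v *m M by rewrite /v /M mul_row_col mulmx0 addr0 mulmxKpV.
  rewrite mulmx_sum_row => /(congr1 trmx); rewrite trmxK => ->.
  rewrite raddf_sum; apply: eq_bigr => i _.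
  by apply/matrixP => a b; rewrite !mxE.
Qed.

Lemma aff_repr : exists r (W : 'M[R]_(r, n)), forall x, aff C x <-> (x^T <= W)%MS.
Proof.
pose p := fun k => `[< P k >].
have exP : exists k, p k.
  exists 0%N; apply/asboolP; exists 0%N, (0 : 'M[R]_(0, n)); split.
    by case.
  by rewrite mxrank0.
have ubP : forall k, p k -> (k <= n)%N.
  by move=> k /asboolP [r [W [_ <-]]]; apply: rank_leq_col.
case: (ex_maxnP exP ubP) => k /asboolP [r [W [HW rk]]] maxk.
exists r, W => x; split; last exact: sub_aff.
apply: aff_sub => f Cf; apply/negPn/negP => nf.
have h1 : p (\rank (col_mx W f^T)).
  apply/asboolP; exists (r + 1)%N, (col_mx W f^T); split => //.
  move=> i; case: (split_ordP i) => j ->; first by rewrite rowKu.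
  rewrite rowKd; have -> : (row j f^T)^T = f.
    by apply/matrixP => a b; rewrite !mxE (ord1 j) (ord1 b).
  done.
have := maxk _ h1; rewrite -addsmxE.
have [le eqr] := mxrank_leqif_sup (addsmxSl W f^T).
rewrite addsmx_sub submx_refl /= (negbTE nf) in eqr.
by rewrite -rk => h; move: eqr; rewrite eqn_leq h le.
Qed.

End H4.



Section H5.
Variable R : realType.
Variables m n r : nat.
Variable A : 'M[R]_(m, n).
Variable W : 'M[R]_(r, n).

Lemma hoffman_lin : exists2 c, 0 <= c & forall d, (d^T <= W)%MS ->
  exists v, [/\ (v^T <= W)%MS, A *m v = A *m d & enorm v <= c * enorm (A *m d)].
Proof.
set M := W *m A^T.
set G := pinvmx M *m W.
exists (mnorm1 G^T); first exact: mnorm1_ge0.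
move=> d dW.
set w := (A *m d)^T.
have wM : (w <= M)%MS.
  have -> : w = (d^T *m pinvmx W) *m M by rewrite /w /M trmx_mul mulmxA mulmxKpV.
  exact: submxMl.
exists (G^T *m (A *m d)); split.
- by rewrite trmx_mul trmxK /G mulmxA submxMl.
- have e : w *m G *m A^T = w.
    rewrite /G -mulmxA -[pinvmx M *m W *m A^T]mulmxA [w *m (pinvmx M *m _)]mulmxA.
    exact: mulmxKpV wM.
  apply: trmx_inj; rewrite trmx_mul [X in X *m A^T]trmx_mul trmxK.
  exact: e.
- exact: enorm_mul.
Qed.

End H5.



Lemma enorm_rev (R : realType) k (a b : 'cV[R]_k) : `|enorm a - enorm b| <= enorm (a - b).
Proof.
have h1 := enormD (a - b) b; rewrite subrK in h1.
have h2 := enormD (b - a) a; rewrite subrK enormB in h2.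
rewrite ler_norml; apply/andP; split; lra.
Qed.

Section H6.
Variable R : realType.
Variable n : nat.

Lemma entry_mx_norm (z : 'rV[R]_n) i : `|z 0 i| <= `|z|.
Proof.
have -> : `|z| = mx_norm z by []. rewrite mx_normrE.
by apply/bigmax_geP; right; exists (0, i).
Qed.

Lemma enorm_mx_norm (z : 'rV[R]_n) : enorm z^T <= `|z| *+ n.
Proof.
apply: (le_trans (enorm_le_sum _)).
have -> : `|z| *+ n = \sum_(i < n) `|z| by rewrite sumr_const card_ord.
by apply: ler_sum => i _; rewrite mxE entry_mx_norm.
Qed.

Lemma lip_cont (f : 'rV[R]_n -> R) k : 0 <= k ->
  (forall x y, `|f x - f y| <= k * `|x - y|) -> continuous f.
Proof.
move=> k0 H x P /nbhs_ballP [e e0 HP].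
apply/nbhs_ballP; exists (e / (k + 1)).
  by rewrite /= divr_gt0 // ltr_wpDl.
move=> y; rewrite -ball_normE /ball_ /= => hxy; apply: HP.
rewrite -ball_normE /ball_ /=.
apply: (le_lt_trans (H x y)).
have k1 : 0 < k + 1 by rewrite ltr_wpDl.
rewrite ltr_pdivlMr // in hxy.
have := normr_ge0 (x - y); nra.
Qed.

Lemma dist_rev (a b : 'cV[R]_n) (F : set 'cV[R]_n) : F !=set0 ->
  `|dist a F - dist b F| <= enorm (a - b).
Proof.
move=> F0; have h1 := dist_lip a b F0; have h2 := dist_lip b a F0.
rewrite enormB in h2.
rewrite ler_norml; apply/andP; split; lra.
Qed.

Lemma dist_scale (F : set 'cV[R]_n) t d :
  F !=set0 -> (forall z t, F z -> 0 <= t -> F (t *: z)) -> 0 < t ->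
  dist (t^-1 *: d) F <= t^-1 * dist d F.
Proof.
move=> F0 Fs t0.
rewrite -(ler_pM2l t0) mulrA mulfV ?gt_eqF // mul1r.
apply: dist_glb => // z Fz.
apply: (@le_trans _ _ (t * enorm (t^-1 *: d - t^-1 *: z))).
  apply: (ler_wpM2l (ltW t0)); apply: (dist_le _ (Fs z t^-1 Fz _)).
  by rewrite invr_ge0 ltW.
rewrite -scalerBr enormZ ger0_norm; last by rewrite invr_ge0 ltW.
by rewrite mulrA mulfV ?gt_eqF // mul1r.
Qed.

Lemma lower_bound m (A : 'M[R]_(m, n)) (F : set 'cV[R]_n) :
  F !=set0 -> (forall d, dist d F = 0 -> F d) ->
  (forall z t, F z -> 0 <= t -> F (t *: z)) ->
  (forall d, F d -> A *m d = 0 -> d = 0) ->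
  exists2 al, 0 < al & forall d, al * enorm d <= enorm (A *m d) + dist d F.
Proof.
move=> F0 Fcl Fs Finj.
pose h := fun z : 'rV[R]_n => enorm (A *m z^T) + dist z^T F.
have hcont : continuous h.
  apply: (@lip_cont _ ((mnorm1 A + 1) *+ n)).
    by rewrite mulrn_wge0 // addr_ge0 ?mnorm1_ge0.
  move=> x y; rewrite /h.
  have e1 := enorm_rev (A *m x^T) (A *m y^T).
  have e2 := dist_rev x^T y^T F0.
  have eT : x^T - y^T = (x - y)^T by apply/matrixP => i j; rewrite !mxE.
  rewrite -mulmxBr eT in e1; rewrite eT in e2.
  have e3 := enorm_mul A (x - y)^T.
  have e4 := enorm_mx_norm (x - y).
  have e5 := mnorm1_ge0 A.
  have e6 := enorm_ge0 (x - y)^T.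
  rewrite mulrnAl -mulrnAr.
  have e7 : (mnorm1 A + 1) * enorm (x - y)^T <= (mnorm1 A + 1) * (`|x - y| *+ n).
    by rewrite ler_wpM2l // addr_ge0.
  have e8 := ler_normD (enorm (A *m x^T) - enorm (A *m y^T)) (dist x^T F - dist y^T F).
  rewrite opprD addrACA; apply: le_trans e8 _.
  rewrite mulrDl mul1r in e7; rewrite mulrDl mul1r.
  lra.
pose S := [set z : 'rV[R]_n | enorm z^T = 1].
have Sc : compact S.
  apply: bounded_closed_compact.
    exists 1; split; first exact: num_real.
    move=> M M1 z Sz; apply: le_trans (ltW M1).
    have -> : `|z| = mx_norm z by []. rewrite mx_normrE.
    apply: bigmax_le => // [[i j]] _ /=.
    have Sz1 : enorm z^T = 1 := Sz.
    by move: (entry_le z^T j); rewrite mxE (ord1 i) Sz1.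
  apply: (@preimage_closed _ _ (fun z : 'rV[R]_n => enorm z^T) [set x | x = 1]).
    move=> z _; apply: (@lip_cont _ n%:R) => // a b.
    apply: le_trans (enorm_rev _ _) _; rewrite -linearB /= mulr_natl.
    exact: enorm_mx_norm.
  exact: closed_eq.
have Ic : compact (h @` S) := continuous_compact (continuous_subspaceT hcont) Sc.
have Icl : closed (h @` S) := compact_closed (@Rhausdorff R) Ic.
have n0 : ~ (h @` S) 0.
  move=> [z Sz hz0].
  have hA : enorm (A *m z^T) = 0.
    apply/le_anti; rewrite enorm_ge0 andbT -hz0 /h lerDl; exact: dist_ge0.
  have hd : dist z^T F = 0.
    apply/le_anti; rewrite dist_ge0 andbT -hz0 /h lerDr; exact: enorm_ge0.
  have := Finj _ (Fcl _ hd) (enorm_eq0 hA).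
  by move=> z0; move: Sz; rewrite /S /= z0 enorm0 => /esym/eqP; rewrite oner_eq0.
have Op : open (~` (h @` S)) := closed_openC Icl.
move: Op; rewrite openE => /(_ 0 n0) /nbhs_ballP [e e0 He].
exists e => // d.
have [->|dn0] := eqVneq d 0.
  by rewrite enorm0 mulr0 addr_ge0 ?enorm_ge0 ?dist_ge0.
set t := enorm d.
have t0 : 0 < t.
  rewrite lt_neqAle enorm_ge0 andbT eq_sym; apply/negP => /eqP /enorm_eq0.
  by move/eqP; rewrite (negbTE dn0).
have Sz : S (t^-1 *: d)^T.
  by rewrite /S /= trmxK enormZ ger0_norm ?invr_ge0 ?ltW // mulVf ?gt_eqF.
have : ~ ball (0 : R) e (h (t^-1 *: d)^T).
  by move=> /He; apply; exists (t^-1 *: d)^T.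
move=> nb.
have hz : h (t^-1 *: d)^T = t^-1 * enorm (A *m d) + dist (t^-1 *: d) F.
  rewrite /h trmxK -scalemxAr enormZ ger0_norm //; by rewrite invr_ge0 ltW.
have hge : 0 <= h (t^-1 *: d)^T by rewrite /h addr_ge0 ?enorm_ge0 ?dist_ge0.
have hb : e <= h (t^-1 *: d)^T.
  rewrite leNgt; apply/negP => lt; apply: nb.
  by rewrite -ball_normE /ball_ /= sub0r normrN ger0_norm.
have h2 := dist_scale d F0 Fs t0.
have h3 : e <= t^-1 * (enorm (A *m d) + dist d F).
  rewrite mulrDr; apply: (le_trans hb); rewrite hz lerD2l; exact: h2.
have : e * t <= t^-1 * (enorm (A *m d) + dist d F) * t by rewrite ler_wpM2r // ltW.
by rewrite mulrAC mulVf ?gt_eqF // mul1r.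
Qed.

End H6.



Section H7.
Variable R : realType.
Variable n : nat.

Lemma entry_mx_norm' p q (z : 'M[R]_(p, q)) i j : `|z i j| <= `|z|.
Proof.
have -> : `|z| = mx_norm z by []. rewrite mx_normrE.
by apply/bigmax_geP; right; exists (i, j).
Qed.

Lemma mx_norm_enorm (z : 'cV[R]_n) : `|z| <= enorm z.
Proof.
have -> : `|z| = mx_norm z by []. rewrite mx_normrE.
apply: bigmax_le => [|[i j] _ /=]; first exact: enorm_ge0.
by rewrite (ord1 j) entry_le.
Qed.

Variable K : set 'cV[R]_n.
Hypothesis PK : proper_cone K.
Variable s : 'cV[R]_n.

Lemma Fclosed d : dist d (comp_face K s) = 0 -> comp_face K s d.
Proof.
move=> d0.
have appr : forall e, 0 < e -> exists z, comp_face K s z /\ enorm (d - z) < e.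
  move=> e e0; have [z [Fz hz]] := dist_approx d (Fne PK s) e0.
  by exists z; split => //; rewrite d0 add0r in hz.
split.
  apply: contrapT => nK.
  have [_ _ Kcl _ _] := PK.
  have Op : open (~` K) := closed_openC Kcl.
  move: Op; rewrite openE => /(_ d nK) /nbhs_ballP [e e0 He].
  have [z [[Kz _] hz]] := appr e e0.
  apply: (He z) => //; rewrite -ball_normE /ball_ /=.
  exact: le_lt_trans (mx_norm_enorm _) hz.
apply: contrapT => /eqP nz.
have pos : 0 < `|dotv d s| by rewrite normr_gt0.
set e := `|dotv d s| / (enorm s + 1).
have e0 : 0 < e by rewrite divr_gt0 // ltr_wpDl ?enorm_ge0.
have [z [[_ zs] hz]] := appr e e0.
have : dotv d s = dotv (d - z) s by rewrite dotvBl zs subr0.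
move=> eq; have := CS (d - z) s; rewrite -eq => h.
have hs := enorm_ge0 s.
have : enorm (d - z) * enorm s <= e * enorm s by rewrite ler_wpM2r // ltW.
have : e * (enorm s + 1) = `|dotv d s| by rewrite /e mulfVK // gt_eqF // ltr_wpDl.
have := enorm_ge0 (d - z).
nra.
Qed.

End H7.



Section H8.
Variable R : realType.

Lemma trDZ n (x y : 'cV[R]_n) a : (x + a *: y)^T = x^T + a *: y^T.
Proof. by apply/matrixP => i j; rewrite !mxE. Qed.

Lemma subW_DZ n r (W : 'M[R]_(r, n)) (x y : 'cV[R]_n) a :
  (x^T <= W)%MS -> (y^T <= W)%MS -> ((x + a *: y)^T <= W)%MS.
Proof. by move=> hx hy; rewrite trDZ addmx_sub // scalemx_sub. Qed.

Lemma subW_B n r (W : 'M[R]_(r, n)) (x y : 'cV[R]_n) :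
  (x^T <= W)%MS -> (y^T <= W)%MS -> ((x - y)^T <= W)%MS.
Proof. by move=> hx hy; rewrite -scaleN1r subW_DZ. Qed.

Lemma subW_Z n r (W : 'M[R]_(r, n)) (x : 'cV[R]_n) a :
  (x^T <= W)%MS -> ((a *: x)^T <= W)%MS.
Proof. by move=> hx; rewrite -[a *: x]add0r subW_DZ // trmx0 sub0mx. Qed.

Lemma mem_aff n (C : set 'cV[R]_n) x : C x -> aff C x.
Proof.
move=> Cx; exists 1%N, (fun=> 1), (fun=> x); split => //.
by rewrite !big_ord1 scale1r.
Qed.

Lemma inf_ge0 (E : set R) : (forall x, E x -> 0 <= x) -> 0 <= inf E.
Proof.
move=> H; have [[y Ey]|E0] := pselect (E !=set0).
  by apply: lb_le_inf; [exists y | move=> z /H].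
have -> : E = set0 by apply/seteqP; split => // t Et; apply: E0; exists t.
by rewrite inf0.
Qed.

End H8.

Unset Implicit Arguments. Set Strict Implicit. Set Printing Implicit Defensive.

Theorem lemma2 (R : realType) (m n : nat) (K : set 'cV[R]_n)
  (A : 'M[R]_(m, n)) (b : 'cV[R]_m) (c : 'cV[R]_n)
  (xs : 'cV[R]_n) (ys : 'cV[R]_m) :
  proper_cone K ->
  strong_duality A b c K ->
  primal_sol A b c K xs ->
  dual_sol A b c K ys ->
  relint (comp_face K (c - A^T *m ys)) xs ->
  (exists gamma gamma' : R, 0 <= gamma /\ 0 <= gamma' /\
     forall x, aff (comp_face K (c - A^T *m ys)) x ->
       dist x (primal_sol A b c K) <=
         gamma * enorm (A *m x - b) + gamma' * dist x (comp_face K (c - A^T *m ys)))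
  /\
  ((exists x0, primal_sol A b c K = [set x0]) ->
     forall x, aff (comp_face K (c - A^T *m ys)) x ->
       dist x (primal_sol A b c K) <=
         (sigma_min A (aff (comp_face K (c - A^T *m ys))))^-1 * enorm (A *m x - b)).
Proof.
move=> PK SD Xs Ys RI.
set s := c - A^T *m ys.
set F := comp_face K s.
set X := primal_sol A b c K.
have sK : forall x, K x -> 0 <= dotv s x by case: Ys.
have Ab : A *m xs = b by case: Xs => [[]].
have cdec : forall y, dotv c y = dotv s y + dotv ys (A *m y).
  by move=> y; rewrite dotv_mul -dotvDl /s subrK.
have FLX : forall y, F y -> A *m y = b -> X y.
  move=> y [Ky ys0] Ay; split; first by split.
  move=> x' [Ax' Kx']; rewrite !cdec Ay Ax' (dotvC s y) ys0 add0r lerDr; exact: sK.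
have [Fxs [r0 [r0p Hr]]] := RI.
have [r [W HV]] := aff_repr (F0 PK s).
have xsW : (xs^T <= W)%MS by apply/HV; apply: mem_aff.
have FW : forall z, F z -> (z^T <= W)%MS by move=> z Fz; apply/HV; apply: mem_aff.
have [c1 c1p Hc] := hoffman_lin A W.
have Finj : forall d, F d -> A *m d = 0 -> d = 0.
  move=> d Fd Ad0; apply: contrapT => dn0.
  have [_ _ Xc _] := SD.
  have [M [_ HM]] := compact_bounded Xc.
  have bd : forall y, X y -> `|y| <= M + 1.
    by move=> y Xy; apply: (HM (M + 1)) => //; rewrite ltrDl.
  have : ~ (forall i, d i 0 = 0).
    by move=> H; apply: dn0; apply/matrixP => i j; rewrite (ord1 j) mxE H.
  move/existsNP => [i /eqP di].
  have M1 : 0 <= M + 1 := le_trans (normr_ge0 _) (bd xs Xs).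
  have dp : 0 < `|d i 0| by rewrite normr_gt0.
  set t := (M + 1 + `|xs i 0| + 1) / `|d i 0|.
  have t0 : 0 <= t.
    rewrite /t divr_ge0 ?(ltW dp) //; apply: addr_ge0 => //; exact: addr_ge0.
  have Xy : X (xs + t *: d).
    apply: FLX; first exact: (Fadd PK Fxs (Fscale PK Fd t0)).
    by rewrite mulmxDr -scalemxAr Ad0 scaler0 addr0 Ab.
  have h0 := bd _ Xy.
  have h1 := entry_mx_norm' (xs + t *: d) i 0.
  rewrite !mxE in h1.
  have h2 := ler_normD (xs i 0 + t * d i 0) (- xs i 0).
  rewrite addrC addKr normrN normrM (ger0_norm t0) in h2.
  have tt : t * `|d i 0| = M + 1 + `|xs i 0| + 1 by rewrite /t mulfVK ?gt_eqF.
  rewrite tt in h2.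
  have := le_trans h2 (lerD (le_trans h1 h0) (lexx `|xs i 0|)).
  move: (M) (`|xs i 0|) => a a'; lra.
have [al alp Hal] := lower_bound (Fne PK s) (@Fclosed _ _ _ PK s) (@Fscale _ _ _ PK s) Finj.
have Xne : X !=set0 by exists xs.
have Fne' : F !=set0 := Fne PK s.
set Kc := 4 * enorm xs / (r0 * al) + 2 / al.
have Kc0 : 0 <= Kc.
  by rewrite /Kc addr_ge0 ?divr_ge0 ?mulr_ge0 ?enorm_ge0 ?mulr_gt0 ?ltW.
have key : forall u, (u^T <= W)%MS -> A *m u = b -> dist u X <= Kc * dist u F.
  move=> u uW Au.
  set D := u - xs.
  have h1 : dist u X <= enorm D := dist_le u Xs.
  have ADn : A *m D = 0 by rewrite mulmxBr Au Ab subrr.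
  have h2 : al * enorm D <= enorm xs + dist u F.
    have := Hal D; rewrite ADn enorm0 add0r => hh; apply: le_trans hh _.
    have := dist_lip D u Fne'.
    have -> : D - u = - xs by rewrite /D addrAC subrr add0r.
    by rewrite enormN.
  have h3 : dist u X * r0 <= 2 * enorm D * dist u F.
    have [Dn0|Dnp] := eqVneq (enorm D) 0.
      have -> : dist u X = 0 by apply/le_anti; rewrite dist_ge0 andbT -Dn0 h1.
      by rewrite mul0r Dn0 mulr0 mul0r.
    have Dpos : 0 < enorm D by rewrite lt_neqAle eq_sym Dnp enorm_ge0.
    have D2 : 0 < 2 * enorm D by rewrite mulr_gt0.
    suff : dist u X * r0 / (2 * enorm D) <= dist u F.
      by rewrite (ler_pdivrMr _ _ D2) [X in _ <= X -> _]mulrC.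
    apply: dist_glb Fne' _ => z Fz.
    rewrite (ler_pdivrMr _ _ D2).
    have [w0|wn0] := eqVneq (enorm (u - z)) 0.
      have uz : u = z by apply/eqP; rewrite -subr_eq0; apply/eqP; apply: enorm_eq0.
      have Xu : X u by apply: FLX => //; rewrite uz.
      by rewrite (dist_mem Xu) mul0r w0 mul0r.
    set w := enorm (u - z).
    have wp : 0 < w by rewrite lt_neqAle eq_sym wn0 enorm_ge0.
    set lam := 2 * w / (r0 + 2 * w).
    set a := r0 / (2 * w).
    have a0 : 0 <= a by rewrite /a divr_ge0 ?mulr_ge0 // ltW.
    set p := xs + a *: (u - z).
    have pW : (p^T <= W)%MS := subW_DZ a xsW (subW_B uW (FW z Fz)).
    have Fp : F p.
      apply: Hr; first by apply/HV.
      rewrite /p (addrC xs) addrK enormZ ger0_norm // -/w /a.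
      have -> : r0 / (2 * w) * w = r0 / 2 by field; rewrite gt_eqF.
      by rewrite ltr_pdivrMr // ltr_pMr // ltr1n.
    have r2w : 0 < r0 + 2 * w by rewrite addr_gt0 ?mulr_gt0.
    have lam01 : 0 <= lam <= 1.
      apply/andP; split; first by rewrite /lam divr_ge0 ?mulr_ge0 ?ltW.
      by rewrite /lam ler_pdivrMr // mul1r lerDr ltW.
    have Fy := Fconv PK Fp Fz lam01.
    have ll : lam * a = 1 - lam.
      rewrite /lam /a; field.
      by apply/andP; split; rewrite ?mulf_neq0 ?gt_eqF.
    have yeq : lam *: p + (1 - lam) *: z = lam *: xs + (1 - lam) *: u.
      apply/matrixP => i j; rewrite !mxE mulrDr mulrA ll; ring.
    have Xy : X (lam *: xs + (1 - lam) *: u).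
      apply: FLX; first by rewrite -yeq.
      by rewrite mulmxDr -!scalemxAr Ab Au -scalerDl addrC subrK scale1r.
    have dX := dist_le u Xy.
    have eqD : u - (lam *: xs + (1 - lam) *: u) = lam *: D.
      by apply/matrixP => i j; rewrite !mxE; ring.
    rewrite eqD in dX.
    rewrite enormZ ger0_norm in dX; last by case/andP: lam01.
    have lr : lam * r0 <= 2 * w.
      rewrite /lam mulrAC ler_pdivrMr //; nra.
    have := enorm_ge0 D.
    have := dist_ge0 u X.
    nra.
  have hxs := enorm_ge0 xs.
  have hdu := dist_ge0 u F.
  have hdX := dist_ge0 u X.
  have ra : 0 < r0 * al by rewrite mulr_gt0.
  suff : dist u X * (r0 * al) <= (4 * enorm xs + 2 * r0) * dist u F.
    have KcE : Kc * (r0 * al) = 4 * enorm xs + 2 * r0.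
      rewrite /Kc; field.
      by apply/andP; split; rewrite gt_eqF.
    by move=> h; rewrite -(ler_pM2r ra) mulrAC KcE.
  have [c1case|c2case] := lerP (dist u F) (enorm xs).
    have e1 : al * enorm D <= 2 * enorm xs by lra.
    have e2 : dist u X * r0 * al <= 2 * enorm D * dist u F * al by rewrite ler_wpM2r // ltW.
    have e3 : 2 * dist u F * (al * enorm D) <= 2 * dist u F * (2 * enorm xs).
      by rewrite ler_wpM2l // mulr_ge0.
    have e4 : 0 <= 2 * r0 * dist u F by rewrite mulr_ge0 // mulr_ge0 // ltW.
    nra.
  have e1 : al * enorm D <= 2 * dist u F by lra.
  have e2 : dist u X * (r0 * al) <= enorm D * (r0 * al) by rewrite ler_wpM2r // ltW.
  have e3 : r0 * (al * enorm D) <= r0 * (2 * dist u F) by rewrite ler_wpM2l // ltW.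
  have e4 : 0 <= 4 * enorm xs * dist u F by rewrite mulr_ge0 // mulr_ge0.
  nra.
split.
  exists (c1 + Kc * c1), Kc; split; first by rewrite addr_ge0 // mulr_ge0.
  split => // x Vx.
  have xW : (x^T <= W)%MS by apply/HV.
  set d := x - xs.
  have dW : (d^T <= W)%MS := subW_B xW xsW.
  have [v [vW Av hv]] := Hc d dW.
  have Ad : A *m d = A *m x - b by rewrite mulmxBr Ab.
  rewrite Ad in hv Av.
  set u := x - v.
  have uW : (u^T <= W)%MS := subW_B xW vW.
  have Au : A *m u = b by rewrite mulmxBr Av opprB addrC subrK.
  have k1 := key u uW Au.
  have k2 := dist_lip x u Xne.
  have xu : x - u = v by rewrite /u opprB addrC subrK.
  rewrite xu in k2.
  have k3 := dist_lip u x Fne'.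
  have ux : u - x = - v by rewrite /u addrAC subrr add0r.
  rewrite ux enormN in k3.
  have k4 : Kc * dist u F <= Kc * (enorm v + dist x F) by rewrite ler_wpM2l.
  have k5 : Kc * enorm v <= Kc * (c1 * enorm (A *m x - b)) by rewrite ler_wpM2l.
  have := enorm_ge0 (A *m x - b).
  nra.
move=> [x0 HX] x Vx.
have xs0 : xs = x0 by move: Xs; rewrite -/X HX.
have N0 : forall d : 'cV[R]_n, (d^T <= W)%MS -> A *m d = 0 -> d = 0.
  move=> d dW Ad0; apply: contrapT => dn0.
  have tp : 0 < enorm d.
    rewrite lt_neqAle enorm_ge0 andbT eq_sym; apply/negP => /eqP /enorm_eq0.
    exact: dn0.
  set a := r0 / (2 * enorm d).
  have a0 : 0 < a by rewrite /a divr_gt0 // mulr_gt0.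
  set q := xs + a *: d.
  have qW : (q^T <= W)%MS := subW_DZ a xsW dW.
  have Fq : F q.
    apply: Hr; first by apply/HV.
    rewrite /q (addrC xs) addrK enormZ ger0_norm ?ltW // /a.
    have -> : r0 / (2 * enorm d) * enorm d = r0 / 2 by field; rewrite gt_eqF.
    by rewrite ltr_pdivrMr // ltr_pMr // ltr1n.
  have Xq : X q by apply: FLX => //; rewrite mulmxDr -scalemxAr Ad0 scaler0 addr0.
  move: Xq; rewrite HX /= -xs0 => /eqP; rewrite -subr_eq0 /q (addrC xs) addrK.
  by rewrite scaler_eq0 (gt_eqF a0) /= => /eqP.
have lowc : forall d : 'cV[R]_n, (d^T <= W)%MS -> enorm d <= c1 * enorm (A *m d).
  move=> d dW; have [v [vW Av hv]] := Hc d dW.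
  have : d - v = 0 by apply: N0; [exact: subW_B | rewrite mulmxBr Av subrr].
  by move=> /eqP; rewrite subr_eq0 => /eqP dv; rewrite [X in enorm X <= _]dv.
have xW : (x^T <= W)%MS by apply/HV.
set d := x - xs.
have dW : (d^T <= W)%MS := subW_B xW xsW.
have Ad : A *m d = A *m x - b by rewrite mulmxBr Ab.
apply: le_trans (dist_le x Xs) _; rewrite -/d -Ad.
set sig := sigma_min A (aff F).
have sig0 : 0 <= sig by apply: inf_ge0 => _ [y _ <-]; apply: enorm_ge0.
have [->|dn0] := eqVneq d 0.
  by rewrite enorm0 mulr_ge0 ?invr_ge0 ?enorm_ge0.
have tp : 0 < enorm d.
  rewrite lt_neqAle enorm_ge0 andbT eq_sym; apply/negP => /eqP /enorm_eq0.
  by move/eqP; rewrite (negbTE dn0).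
set y0 := (enorm d)^-1 *: d.
have y0W : (y0^T <= W)%MS := subW_Z _ dW.
have y01 : enorm y0 = 1 by rewrite enormZ ger0_norm ?invr_ge0 ?enorm_ge0 // mulVf ?gt_eqF.
have Ey0 : [set enorm (A *m x) | x in [set x | aff F x /\ enorm x = 1]] (enorm (A *m y0)).
  by exists y0 => //; split => //; apply/HV.
have sig_le : sig <= enorm (A *m y0).
  apply: (ge_inf _ Ey0); exists 0 => _ [y _ <-]; exact: enorm_ge0.
have c1p' : 0 < c1.
  have := lowc _ y0W; rewrite y01 => h.
  rewrite lt_neqAle c1p andbT; apply/negP => /eqP c10.
  by move: h; rewrite -c10 mul0r ler10.
have sigp : 0 < sig.
  apply: (@lt_le_trans _ _ c1^-1); first by rewrite invr_gt0.
  apply: lb_le_inf; first by exists (enorm (A *m y0)).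
  move=> _ [y [Vy y1] <-]; have := lowc y (proj1 (HV y) Vy); rewrite y1.
  by rewrite -ler_pdivrMl // mulr1.
have : enorm (A *m y0) = (enorm d)^-1 * enorm (A *m d).
  by rewrite /y0 -scalemxAr enormZ ger0_norm // invr_ge0 enorm_ge0.
move=> e; rewrite e in sig_le.
rewrite -(ler_pM2l sigp) mulrA mulfV ?gt_eqF // mul1r.
have tpi : 0 < (enorm d)^-1 by rewrite invr_gt0.
by rewrite -ler_pdivlMr // [_ / _]mulrC.
Qed.
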